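(* Let $G = [V_1]H_1 \times \dots \times [V_n]H_n$ be a direct product of type 1 primitive groups $[V_i]H_i$ such that $|H_i| > |V_i|$ for each $i$. Then $G$ has Property A.
   Context: All groups are finite. A type 1 primitive group is a semidirect product $[V]H$ where $V$ is a non-trivial finite vector space over a field of prime order (an elementary abelian group) and $H$ is a subgroup of $\mathrm{Aut}(V)$ acting irreducibly on $V$, with the natural action. A group $G$ has Property A if for every non-trivial abelian normal subgroup $A$ of $G$, $|G/C_G(A)| > |A|$. *)

(* Defs.v *)
From mathcomp Require Import all_boot all_fingroup all_solvable.
Set Implicit Arguments.
Unset Strict Implicit.
Unset Printing Implicit Defensive.
Local Open Scope group_scope.

(* K is a type 1 primitive group [V]H, realized internally:
   K = V ><| H (semidirect product, V normal, H a complement),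
   V is a non-trivial elementary abelian p-group (p prime),
   H acts faithfully on V by conjugation (so H embeds in Aut(V) with
   the natural action), and irreducibly. *)
Definition type1_primitive (gT : finGroupType) (K V H : {set gT}) : Prop :=
  [/\ V ><| H = K,
      exists2 p, prime p & p.-abelem V,
      V != 1,
      'C_H(V) = 1
    & acts_irreducibly H V 'J].

Definition propertyA (gT : finGroupType) (G : {set gT}) : Prop :=
  forall A : {group gT}, A <| G -> abelian A -> A :!=: 1 ->
    #|A| < #|G : 'C_G(A)|.

(* Main.v *)
Require Import Defs.
From mathcomp Require Import all_boot all_fingroup all_solvable.
From mathcomp Require Import zify.
Set Implicit Arguments.
Unset Strict Implicit.
Unset Printing Implicit Defensive.
Local Open Scope group_scope.

Definition QA (gT : finGroupType) (G : {set gT}) : Prop :=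
  forall A : {group gT}, A <| G -> abelian A ->
    (#|A| <= #|G : 'C_G(A)|)%N /\ (A :!=: 1 -> (#|A| < #|G : 'C_G(A)|)%N).

Lemma QA_prim (gT : finGroupType) (K V H : {group gT}) :
  type1_primitive K V H -> (#|V| < #|H|)%N -> QA K.
Proof.
case=> defK [p _ abV] ntV cHV irr ltVH.
have cVV := abelem_abelian abV.
have [_ mulVH nVH tiVH] := sdprodP defK.
have sVK : V \subset K by rewrite -mulVH mulG_subl.
have sHK : H \subset K by rewrite -mulVH mulG_subr.
have cKV : 'C_K(V) = V.
  have sVC : V \subset 'C_K(V) by rewrite subsetI sVK.
  rewrite -{2}(mulg1 V) -cHV /=.
  have -> : 'C_H(V) = H :&: 'C_K(V) by rewrite setIA (setIidPl sHK).
  by rewrite group_modl // mulVH setIA setIid.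
have idxV : #|K : V| = #|H|.
  have := sdprod_card defK; rewrite -(Lagrange sVK) => /eqP.
  by rewrite eqn_pmul2l ?cardG_gt0 // => /eqP.
move=> A nAK cAA.
have [sAK nAK'] := andP nAK.
have AV : A :=: 1 \/ A :=: V.
  have nVK : K \subset 'N(V) by rewrite -mulVH mul_subG ?normG.
  have [tAV | ntAV] := eqVneq (A :&: V) 1.
    left; apply/trivgP; rewrite -tAV subsetI subxx /=.
    have : A \subset 'C_K(V).
      rewrite subsetI sAK; apply/commG1P/trivgP; rewrite -tAV subsetI.
      rewrite commg_subl commg_subr (subset_trans sVK nAK') /=.
      exact: subset_trans sAK nVK.
    by rewrite cKV.
  right.
  have [_ minV] := mingroupP irr.
  have eqAV : A :&: V = V.
    apply: minV; last exact: subsetIr.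
    rewrite ntAV /= astabsJ normsI //.
    exact: subset_trans sHK nAK'.
  have sVA : V \subset A by rewrite -eqAV subsetIl.
  apply/eqP; rewrite eqEsubset sVA andbT -cKV subsetI sAK.
  by rewrite (subset_trans cAA) // centS.
case: AV => ->.
  by rewrite cards1 indexg_gt0 eqxx.
rewrite cKV idxV ltVH (ltnW ltVH); split=> //.
Qed.

Lemma auxl b c x y : 0 < b -> b <= x -> c < y -> b * c < x * y.
Proof. move=> *; nia. Qed.
Lemma auxr b c x y : 0 < c -> b < x -> c <= y -> b * c < x * y.
Proof. move=> *; nia. Qed.

Lemma QA_dprod (gT : finGroupType) (X Y G : {group gT}) :
  X \x Y = G -> QA X -> QA Y -> QA G.
Proof.
move=> defG QX QY A nAG cAA.
have [_ mulXY cXY tiXY] := dprodP defG.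
have [nXG nYG] := dprod_normal2 defG.
have [sXG nXG'] := andP nXG; have [sYG nYG'] := andP nYG.
have [sAG nAG'] := andP nAG.
have nYA : A \subset 'N(Y) := subset_trans sAG nYG'.
have AYE : A <*> Y = A * Y := norm_joinEl nYA.
set B := (A <*> Y :&: X)%G.
set C := (A :&: Y)%G.
have sAYG : A <*> Y \subset G by rewrite join_subG sAG.
have nYAY : A <*> Y \subset 'N(Y) := subset_trans sAYG nYG'.
have sYAY : Y \subset A <*> Y := joing_subr _ _.
have defAY : B * Y = A <*> Y.
  rewrite group_modr // mulXY; exact/setIidPl.
have sBX : B \subset X := subsetIr _ _.
have sBAY : B \subset A <*> Y := subsetIl _ _.
have cardA : #|A| = (#|B| * #|C|)%N.
  have h1 := mul_cardG B Y.
  have tBY : B :&: Y = 1.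
    by apply/trivgP; rewrite -tiXY setSI.
  rewrite tBY cards1 muln1 defAY in h1.
  have h2 := mul_cardG A Y.
  rewrite -AYE -h1 in h2.
  by apply/eqP; rewrite -(eqn_pmul2r (cardG_gt0 Y)) h2 mulnAC.
have nBX : B <| X.
  rewrite /normal sBX normsI //.
  by rewrite normsY // (subset_trans sXG).
have cYAY : [~: A <*> Y, A <*> Y] \subset Y.
  rewrite -quotient_cents2 // AYE quotientMidr.
  exact: quotient_abelian.
have cBB : abelian B.
  apply/commG1P/trivgP; rewrite -tiXY subsetI.
  rewrite (subset_trans (commgSS sBX sBX)) ?commg_subl ?normG //=.
  exact: subset_trans (commgSS sBAY sBAY) cYAY.
have nCY : C <| Y.
  apply: normalS (subsetIr _ _) sYG _; exact: normalI.
have cCC : abelian C := abelianS (subsetIl _ _) cAA.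
have [leB ltB] := QX B nBX cBB.
have [leC ltC] := QY C nCY cCC.
set D := 'C_G(A).
have sDCB : D \subset 'C(B).
  apply/commG1P/trivgP; rewrite -tiXY subsetI.
  rewrite (subset_trans (commgS _ sBX)) ?commg_subr ?(subset_trans _ nXG') ?subsetIl //=.
  rewrite -quotient_cents2 ?(subset_trans _ nYG') ?subsetIl ?(subset_trans sBX) //.
  apply: subset_trans (quotient_cents _ (subsetIr G 'C(A))) _.
  by apply: centS; rewrite -[A / Y]quotientMidr -AYE quotientS // subsetIl.
have sDCC : D \subset 'C(C).
  exact: subset_trans (subsetIr _ _) (centS (subsetIl _ _)).
have sD : D \subset 'C_X(B) * 'C_Y(C).
  apply/subsetP=> g Dg.
  have Gg : g \in G by move: Dg => /setIP[].
  rewrite -mulXY in Gg; case/mulsgP: Gg => x y Xx Yy defg.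
  have cyB : y \in 'C(B).
    by apply: (subsetP (centS sBX)); apply: (subsetP cXY).
  have cxC : x \in 'C(C).
    by apply: (subsetP (centS (subsetIr A Y))); rewrite centsC in cXY; apply: (subsetP cXY).
  rewrite defg; apply: mem_mulg; rewrite inE ?Xx ?Yy /=.
    have : g * y^-1 \in 'C(B) by rewrite groupM ?groupV // (subsetP sDCB).
    by rewrite defg mulgK.
  have : x^-1 * g \in 'C(C) by rewrite groupM ?groupV // (subsetP sDCC).
  by rewrite defg mulKg.
have leD : (#|D| <= #|'C_X(B)| * #|'C_Y(C)|)%N.
  rewrite mul_cardG; apply: leq_trans (subset_leq_card sD) _.
  by rewrite leq_pmulr ?cardG_gt0.
have eG := Lagrange (subsetIl G 'C(A)).
have eX := Lagrange (subsetIl X 'C(B)).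
have eY := Lagrange (subsetIl Y 'C(C)).
have cG := dprod_card defG.
have Dpos : (0 < #|D|)%N := cardG_gt0 _.
have key : (#|X : 'C_X(B)| * #|Y : 'C_Y(C)| <= #|G : D|)%N.
  rewrite -(leq_pmul2l Dpos) eG -cG -eX -eY.
  by apply: leq_trans (leq_mul leD (leqnn _)) _; rewrite mulnACA.
have bpos : (0 < #|B|)%N := cardG_gt0 _.
have cpos : (0 < #|C|)%N := cardG_gt0 _.
split.
  rewrite cardA; apply: leq_trans key; exact: leq_mul.
move=> ntA; rewrite cardA; apply: leq_trans key.
have [tB | ntB] := eqVneq (B : {set gT}) 1.
  have [tC | ntC] := eqVneq (C : {set gT}) 1.
    by move: ntA; rewrite trivg_card1 cardA tB tC cards1.
  exact: auxl bpos leB (ltC ntC).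
exact: auxr cpos (ltB ntB) leC.
Qed.

Theorem proposition1 (gT : finGroupType) (n : nat) (G : {group gT})
    (K V H : 'I_n -> {group gT}) :
  \big[dprod/1]_(i < n) K i = G ->
  (forall i, type1_primitive (K i) (V i) (H i)) ->
  (forall i, #|V i| < #|H i|) ->
  propertyA G.
Proof.
move=> defG prim ltVH.
pose P (S : {set gT}) := forall G0 : {group gT}, S = G0 -> QA G0.
have PG : P (\big[dprod/1]_(i < n) K i).
  apply: (big_ind P).
  - move=> G0 <- A nA _; have sA1 : A \subset [1 gT] := normal_sub nA.
    have -> : A :=: 1 by apply/trivgP.
    by rewrite cards1 indexg_gt0 eqxx.
  - move=> x y Px Py G0 defG0.
    have [[X Y ex ey] _ _ _] := dprodP defG0.
    rewrite ex ey in defG0 Px Py.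
    exact: QA_dprod defG0 (Px X erefl) (Py Y erefl).
  - move=> i _ G0 eK; have -> : G0 = K i by apply: val_inj.
    exact: QA_prim (prim i) (ltVH i).
move=> A nA cA ntA.
by have [_ ->] := PG G defG A nA cA.
Qed.
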